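(* Let $D\subseteq M$ be $\operatorname{dcl}$-independent over $P$, and assume (OP) and (ind)$_D$. Then for every $A\subseteq P$, $\operatorname{cl}_D(A)=\operatorname{dcl}(A\cup D)\cap P$. In particular, $\operatorname{cl}_D$ is a pregeometry on $P$.
   Context: Let $\mathcal M=\langle M,<,+,0,\dots\rangle$ be an o-minimal expansion of an ordered group with a distinguished positive element $1$, in a language $\mathcal L$; $\operatorname{dcl}$ denotes definable closure in $\mathcal M$, and ''$\mathcal L_A$-definable'' means definable in $\mathcal M$ with parameters from $A\subseteq M$. Fix $P\subseteq M$ and let $\widetilde{\mathcal M}=\langle\mathcal M,P\rangle$; ''$A$-definable'' (unqualified) means definable in $\widetilde{\mathcal M}$ with parameters from $A\subseteq M$. $M^n$ has the product order topology; $\overline V$ is closure. A set $A$ is $\operatorname{dcl}$-independent over $P$ if no $a\in A$ lies in $\operatorname{dcl}((A\setminus\{a\})\cup P)$. For $D\subseteq M$, $P_{ind(D)}$ has universe $P$ and, for each $\mathcal L$-formula $\phi(x)$ with parameters from $D$, a relation $R_\phi=\{a\in P^{|x|}:\mathcal M\models\phi(a)\}$; for $A\subseteq P$, ''$A$-definable in $P_{ind(D)}$'' means definable there with parameters from $A$. $\operatorname{cl}_D$ denotes the definable closure operator of the structure $P_{ind(D)}$. (OP): for every $A\subseteq M$ with $A\setminus P$ $\operatorname{dcl}$-independent over $P$ and every $A$-definable $V\subseteq M^n$, $\overline V$ is $\mathcal L_A$-definable. (ind)$_D$: every $X\subseteq P^n$ definable in $P_{ind(D)}$ equals $\bigcup_{i=1}^l(Y_i\cap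 Q_i)$ for some $\mathcal L$-definable $Y_i\subseteq M^n$ and some $Q_i\subseteq P^n$ $\emptyset$-definable in $P_{ind(D)}$. *)

(* Defs.v *)
From mathcomp Require Import all_boot.
From Stdlib Require List.

Set Implicit Arguments.
Unset Strict Implicit.
Unset Printing Implicit Defensive.

(* Relational first-order structures.  A relation symbol [r] is interpreted *)
(* as a predicate on finite lists of elements; a symbol of fixed arity k is *)
(* one whose interpretation is False on lists of length <> k.  (Function    *)
(* symbols and constants are represented through their graphs; this does   *)
(* not change the definable sets.)                                          *)
Record Structure := MkStructure {
  car : Type;
  sym : Type;
  interp : sym -> seq car -> Prop
}.

Inductive formula (Sym : Type) : Type :=
| FEq : nat -> nat -> formula Sym
| FRel : Sym -> seq nat -> formula Sym
| FNot : formula Sym -> formula Sym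
| FAnd : formula Sym -> formula Sym -> formula Sym
| FEx : nat -> formula Sym -> formula Sym.

Definition upd (T : Type) (e : nat -> T) (i : nat) (a : T) : nat -> T :=
  fun k => if k == i then a else e k.

Fixpoint sat (S : Structure) (e : nat -> car S) (f : formula (sym S)) : Prop :=
  match f with
  | FEq i j => e i = e j
  | FRel r vs => interp r (map e vs)
  | FNot g => ~ sat e g
  | FAnd g h => sat e g /\ sat e h
  | FEx i g => exists a, sat (upd e i a) g
  end.

(* [X ⊆ (car S)^n] is definable in [S] with parameters from [A]:          *)
(* there is a formula phi(x_0..x_{n-1}, y_0..y_{m-1}) and parameters      *)
(* b_0..b_{m-1} in A such that X = phi(S, b).  Variables x_i are the       *)
(* variables 0..n-1 and y_k is variable n+k; the remaining variables are   *)
(* required not to matter (the equivalence holds for every assignment).    *)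
Definition definable (S : Structure) (A : car S -> Prop) (n : nat)
    (X : ('I_n -> car S) -> Prop) : Prop :=
  exists (f : formula (sym S)) (b : seq (car S)),
    (forall y, List.In y b -> A y) /\
    forall (x : 'I_n -> car S) (e : nat -> car S),
      (forall i : 'I_n, e (nat_of_ord i) = x i) ->
      (forall k y, List.nth_error b k = Some y -> e (n + k) = y) ->
      (X x <-> sat e f).

Definition dclS (S : Structure) (B : car S -> Prop) (a : car S) : Prop :=
  definable B (fun x : 'I_1 -> car S => x ord0 = a).

Definition expandP (S : Structure) (P : car S -> Prop) : Structure :=
  @MkStructure (car S) (option (sym S))
    (fun r l => match r with
                | Some r' => interp r' l
                | None => match l with [:: a] => P a | _ => False end
                end).

Definition dcl_indep (S : Structure) (A P : car S -> Prop) : Prop :=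
  forall a, A a -> ~ dclS (fun y => (A y /\ y <> a) \/ P y) a.

(* Closure in the product order topology on M^n (basic open sets are open *)
(* boxes; M has no endpoints since it is a nontrivial ordered group).      *)
Definition closure (M : Type) (lt : M -> M -> Prop) (n : nat)
    (V : ('I_n -> M) -> Prop) : ('I_n -> M) -> Prop :=
  fun x => forall lo hi : 'I_n -> M,
    (forall i, lt (lo i) (x i) /\ lt (x i) (hi i)) ->
    exists y, V y /\ (forall i, lt (lo i) (y i) /\ lt (y i) (hi i)).

(* S is an o-minimal expansion of an ordered group (M,<,+,0) with a        *)
(* distinguished positive element 1; <, +, 0, 1 are part of the language,  *)
(* i.e. (the graphs of) them are ∅-definable in S.                          *)
Definition lower_ok (M : Type) (lt : M -> M -> Prop) (a : option M) (y : M) :=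
  match a with Some a' => lt a' y | None => True end.
Definition upper_ok (M : Type) (lt : M -> M -> Prop) (a : option M) (y : M) :=
  match a with Some a' => lt y a' | None => True end.

Definition omin_ordered_group (S : Structure) (lt : car S -> car S -> Prop)
    (add : car S -> car S -> car S) (zero one : car S) : Prop :=
  definable (fun _ => False) (fun x : 'I_2 -> car S => lt (x ord0) (x ord_max)) /\
  definable (fun _ => False)
    (fun x : 'I_3 -> car S => add (x ord0) (x (inord 1)) = x ord_max) /\
  definable (fun _ => False) (fun x : 'I_1 -> car S => x ord0 = zero) /\
  definable (fun _ => False) (fun x : 'I_1 -> car S => x ord0 = one) /\
  (forall x, ~ lt x x) /\
  (forall x y z, lt x y -> lt y z -> lt x z) /\
  (forall x y, lt x y \/ x = y \/ lt y x) /\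
  (forall x y z, add x (add y z) = add (add x y) z) /\
  (forall x, add zero x = x /\ add x zero = x) /\
  (forall x, exists y, add x y = zero /\ add y x = zero) /\
  (forall x y z, lt x y -> lt (add z x) (add z y) /\ lt (add x z) (add y z)) /\
  lt zero one /\
  (forall X : ('I_1 -> car S) -> Prop, definable (fun _ => True) X ->
     exists (pts : seq (car S)) (ivs : seq (option (car S) * option (car S))),
       forall x, X x <-> (List.In (x ord0) pts \/
          exists iv, List.In iv ivs /\ lower_ok lt iv.1 (x ord0) /\ upper_ok lt iv.2 (x ord0))).

Definition OP (S : Structure) (lt : car S -> car S -> Prop) (P : car S -> Prop) : Prop :=
  forall A : car S -> Prop,
    dcl_indep (fun a => A a /\ ~ P a) P ->
    forall (n : nat) (V : ('I_n -> car S) -> Prop),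
      @definable (@expandP S P) A n V -> definable A (closure lt V).

(* The induced structure P_ind(D): universe P, and for each L-formula phi(x)  *)
(* with parameters from D a relation R_phi = phi(M) ∩ P^|x|.  We index the   *)
(* symbols directly by the L_D-definable sets Y ⊆ M^n (several formulas      *)
(* defining the same set give the same relation).                            *)
Record PIndSym (S : Structure) (D : car S -> Prop) := MkPIndSym {
  pis_n : nat;
  pis_Y : ('I_pis_n -> car S) -> Prop;
  pis_def : definable D pis_Y
}.

Definition PInd (S : Structure) (P D : car S -> Prop) : Structure :=
  @MkStructure {x : car S | P x} (PIndSym D)
    (fun r l => size l = pis_n r /\
       exists x : 'I_(pis_n r) -> {x : car S | P x},
         (forall i : 'I_(pis_n r), List.nth_error l (nat_of_ord i) = Some (x i)) /\
         @pis_Y S D r (fun i => proj1_sig (x i))).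

Definition clD (S : Structure) (P D : car S -> Prop) (A : car S -> Prop)
    (a : car S) : Prop :=
  exists Pa : P a,
    @dclS (@PInd S P D) (fun p => A (proj1_sig p)) (exist P a Pa).

Definition ind (S : Structure) (P D : car S -> Prop) : Prop :=
  forall (n : nat) (X : ('I_n -> car (@PInd S P D)) -> Prop),
    definable (fun _ => True) X ->
    exists (l : nat) (Y : nat -> ('I_n -> car S) -> Prop)
           (Q : nat -> ('I_n -> car (@PInd S P D)) -> Prop),
      (forall k, k < l -> definable (fun _ => True) (Y k)) /\
      (forall k, k < l -> definable (fun _ => False) (Q k)) /\
      (forall x, X x <-> exists2 k, k < l & Y k (fun i => proj1_sig (x i)) /\ Q k x).

Definition pregeometry (M : Type) (P : M -> Prop)
    (cl : (M -> Prop) -> M -> Prop) : Prop :=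
  (forall A, (forall a, A a -> P a) -> forall a, cl A a -> P a) /\
  (forall A, (forall a, A a -> P a) -> forall a, A a -> cl A a) /\
  (forall A B, (forall a, A a -> P a) -> (forall b, B b -> P b) ->
     (forall a, A a -> B a) -> forall a, cl A a -> cl B a) /\
  (forall A, (forall a, A a -> P a) -> forall a, cl (cl A) a -> cl A a) /\
  (forall A, (forall a, A a -> P a) -> forall a, cl A a ->
     exists s : seq M, (forall b, List.In b s -> A b) /\ cl (fun b => List.In b s) a) /\
  (forall A, (forall a, A a -> P a) -> forall a b, P a -> P b ->
     cl (fun x => A x \/ x = b) a -> ~ cl A a -> cl (fun x => A x \/ x = a) b).

(* Main.v *)
Require Import Defs.
From mathcomp Require Import all_boot zify.
From Stdlib Require List.
From Stdlib Require Import FunctionalExtensionality ProofIrrelevance Classical ClassicalEpsilon.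

Set Implicit Arguments.
Unset Strict Implicit.
Unset Printing Implicit Defensive.

Lemma inP (T : eqType) (x : T) l : List.In x l <-> x \in l.
Proof.
elim: l => [|y l IH] //=; rewrite in_cons; split.
  by case=> [->|/IH ->]; rewrite ?eqxx ?orbT.
by case/orP=> [/eqP->|/IH]; [left|right].
Qed.

Section Gen.
Variable S : Structure.
Notation M := (car S).
Notation form := (formula (sym S)).

Fixpoint ren (pi : nat -> nat) (f : form) : form :=
  match f with
  | FEq i j => FEq _ (pi i) (pi j)
  | FRel r vs => FRel r (map pi vs)
  | FNot g => FNot (ren pi g)
  | FAnd g h => FAnd (ren pi g) (ren pi h)
  | FEx i g => FEx (pi i) (ren pi g)
  end.

Lemma upd_ren (pi : nat -> nat) (e : nat -> M) i a : injective pi ->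
  (fun k => upd e (pi i) a (pi k)) = upd (fun k => e (pi k)) i a.
Proof. move=> Hpi; apply: functional_extensionality => k; by rewrite /upd (inj_eq Hpi). Qed.

Lemma sat_ren pi f (e : nat -> M) : injective pi ->
  sat e (ren pi f) <-> sat (fun k => e (pi k)) f.
Proof.
move=> Hpi; elim: f e => [i j|r vs|g IH|g IHg h IHh|i g IH] e /=.
- by [].
- by rewrite -map_comp.
- have := IH e; tauto.
- have := IHg e; have := IHh e; tauto.
- split=> -[a Ha]; exists a; [move/IH: Ha | apply/IH]; by rewrite upd_ren.
Qed.

Fixpoint bnd (f : form) : nat :=
  match f with
  | FEq i j => (maxn i j).+1
  | FRel _ vs => foldr (fun k m => maxn k.+1 m) 0 vs
  | FNot g => bnd g
  | FAnd g h => maxn (bnd g) (bnd h)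
  | FEx i g => maxn i.+1 (bnd g)
  end.

Lemma foldr_max_lt (vs : seq nat) k : k \in vs -> k < foldr (fun k m => maxn k.+1 m) 0 vs.
Proof.
elim: vs => //= v vs IH; rewrite in_cons => /orP[/eqP->|/IH H].
  by rewrite leq_max leqnn.
by rewrite leq_max H orbT.
Qed.

Lemma sat_agree f (e e' : nat -> M) :
  (forall k, k < bnd f -> e k = e' k) -> (sat e f <-> sat e' f).
Proof.
elim: f e e' => [i j|r vs|g IH|g IHg h IHh|i g IH] e e' /= H.
- rewrite !H //; apply: (leq_ltn_trans _ (ltnSn _)); by rewrite leq_max leqnn ?orbT.
- suff -> : map e vs = map e' vs by [].
  by apply/eq_in_map => k /foldr_max_lt /H.
- have := IH e e' H; tauto.
- have := IHg e e' (fun k Hk => H k (leq_trans Hk (leq_maxl _ _))).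
  have := IHh e e' (fun k Hk => H k (leq_trans Hk (leq_maxr _ _))); tauto.
- have HH : forall a, sat (upd e i a) g <-> sat (upd e' i a) g.
    move=> a; apply: IH => k Hk; rewrite /upd; case: eqP => // _.
    by apply: H; rewrite leq_max Hk orbT.
  split=> -[a Ha]; exists a; by apply/HH.
Qed.

Definition exs (vs : seq nat) (f : form) : form := foldr (@FEx _) f vs.

Lemma sat_exs vs f (e : nat -> M) :
  sat e (exs vs f) <-> exists w : nat -> M, sat (fun k => if k \in vs then w k else e k) f.
Proof.
elim: vs e => [|v vs IH] e /=.
  split; [move=> H; exists e; by []| by case].
split.
- case=> a /IH [w Hw]; exists (fun k => if k \in vs then w k else a).
  congr (sat _ f): Hw; apply: functional_extensionality => k.
  rewrite in_cons /upd; case: (k \in vs); first by rewrite orbT.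
  by case: eqP => [->|]; rewrite ?eqxx.
- case=> w Hw; exists (w v); apply/IH; exists w.
  congr (sat _ f): Hw; apply: functional_extensionality => k.
  rewrite in_cons /upd; case: (k \in vs); first by rewrite orbT.
  by rewrite orbF; case: eqP => [->|].
Qed.

Fixpoint conjl (l : seq form) : form :=
  if l is g :: l' then FAnd g (conjl l') else FEq _ 0 0.

Lemma sat_conjl l (e : nat -> M) : sat e (conjl l) <-> (forall g, List.In g l -> sat e g).
Proof.
elim: l => [|g l IH] /=; first by split=> // _ g [].
rewrite IH; split; first by case=> H1 H2 h [<-|/H2].
by move=> H; split; [apply: H; left|move=> h Hh; apply: H; right].
Qed.

Definition def0 (Z : (nat -> M) -> Prop) := exists f : form, forall e, Z e <-> sat e f.

Lemma def0_ext Z Z' : (forall e, Z e <-> Z' e) -> def0 Z -> def0 Z'.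
Proof. move=> H [f Hf]; exists f => e; rewrite -H; exact: Hf. Qed.

Lemma def0_not Z : def0 Z -> def0 (fun e => ~ Z e).
Proof. case=> f Hf; exists (FNot f) => e /=; have := Hf e; tauto. Qed.

Lemma def0_and Z Z' : def0 Z -> def0 Z' -> def0 (fun e => Z e /\ Z' e).
Proof. case=> f Hf [f' Hf']; exists (FAnd f f') => e /=; have := Hf e; have := Hf' e; tauto. Qed.

Lemma def0_ex i Z : def0 Z -> def0 (fun e => exists a, Z (upd e i a)).
Proof. case=> f Hf; exists (FEx i f) => e /=; split=> -[a Ha]; exists a; by apply/Hf. Qed.

Lemma def0_eq i j : def0 (fun e => e i = e j).
Proof. by exists (FEq _ i j). Qed.

Lemma def0_rel r vs : def0 (fun e => interp r (map e vs)).
Proof. by exists (FRel r vs). Qed.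

Lemma def0_pull (pi : nat -> nat) Z : def0 Z -> def0 (fun e => Z (fun k => e (pi k))).
Proof.
case=> f Hf.
pose N := bnd f.
pose Sh := (foldr maxn 0 (map pi (iota 0 N))).+1.
have HSh : forall k, k < N -> pi k < Sh.
  move=> k Hk; rewrite ltnS.
  have : pi k \in map pi (iota 0 N) by apply: map_f; rewrite mem_iota.
  elim: (map pi (iota 0 N)) => //= v l IHl; rewrite in_cons => /orP[/eqP->|/IHl H].
    by rewrite leq_max leqnn.
  by rewrite leq_max H orbT.
pose vs := map (addn Sh) (iota 0 N).
pose body := FAnd (conjl (map (fun k => FEq _ (Sh + k) (pi k)) (iota 0 N)))
                  (ren (fun k => Sh + k) f).
exists (exs vs body) => e; rewrite sat_exs Hf.
have Hinj : injective (fun k => Sh + k) by move=> x y /eqP; rewrite eqn_add2l => /eqP.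
have memvs : forall k, (k \in vs) = (Sh <= k < Sh + N).
  move=> k; rewrite /vs; apply/mapP/idP.
    by case=> x; rewrite mem_iota add0n => /andP[_ Hx] ->; rewrite leq_addr ltn_add2l.
  move=> /andP[H1 H2]; exists (k - Sh); last by rewrite subnKC.
  by rewrite mem_iota add0n ltn_subLR.
split.
- move=> H; exists (fun k => e (pi (k - Sh))) => /=; split.
    apply/sat_conjl => g /List.in_map_iff [k [<- /inP Hk]] /=.
    move: Hk; rewrite mem_iota add0n => Hk.
    by rewrite memvs leq_addr ltn_add2l Hk addKn ifN // memvs negb_and -ltnNge HSh.
  apply/sat_ren => //; move: H; apply: iffLR; apply: sat_agree => k Hk /=.
  by rewrite memvs leq_addr ltn_add2l Hk addKn.
- case=> w /= [/sat_conjl Hc /(sat_ren _ _ Hinj) Hs].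
  move: Hs; apply: iffLR; apply: sat_agree => k Hk /=.
  have Hk' : List.In (FEq (sym S) (Sh + k) (pi k)) (map (fun k => FEq (sym S) (Sh + k) (pi k)) (iota 0 N)).
    apply: (List.in_map (fun k => FEq (sym S) (Sh + k) (pi k))). apply/inP; by rewrite mem_iota.
  move: (Hc _ Hk') => /= ->.
  by rewrite memvs ifN // negb_and -ltnNge HSh.
Qed.


Definition params (e : nat -> M) (s : seq M) : nat -> M :=
  fun k => if k < size s then nth (e 0) s k else e (k - size s).

Definition defA (A : M -> Prop) (Y : (nat -> M) -> Prop) :=
  exists Z s, def0 Z /\ (forall y, List.In y s -> A y) /\ forall e, Y e <-> Z (params e s).

Lemma params_nil e : params e [::] = e.
Proof. apply: functional_extensionality => k; by rewrite /params subn0. Qed.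

Lemma params_cat e s1 s2 : params e (s1 ++ s2) = params (params e s2) s1.
Proof.
apply: functional_extensionality => k; rewrite /params size_cat nth_cat.
case: ifP => H1; case: ifP => H2 //.
- by apply: set_nth_default.
- by case: ifP => H3; [apply: set_nth_default | lia].
- lia.
- case: ifP => H3; [lia|]; by rewrite subnDA.
Qed.

Lemma params_pull (pi : nat -> nat) e s :
  params (fun k => e (pi k)) s =
  (fun k => params e s (if k < size s then k else size s + pi (k - size s))).
Proof.
apply: functional_extensionality => k; rewrite /params; case: ifP => H.
  by rewrite H; apply: set_nth_default.
by rewrite ifN ?addKn //; lia.
Qed.

Lemma params_upd e i a s : params (upd e i a) s = upd (params e s) (i + size s) a.
Proof.
apply: functional_extensionality => k; rewrite /params /upd; case: ifP => H.
  have -> : (k == i + size s) = false by apply/eqP; lia.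
  by apply: set_nth_default.
case: (k =P i + size s) => [->|Hne]; first by rewrite addnK eqxx.
have -> : (k - size s == i) = false by apply/eqP; lia.
by [].
Qed.

Lemma defA_ext A Y Y' : (forall e, Y e <-> Y' e) -> defA A Y -> defA A Y'.
Proof. move=> H [Z [s [HZ [Hs HY]]]]; exists Z, s; split=> //; split=> // e; rewrite -H; exact: HY. Qed.

Lemma defA_mono (A A' : M -> Prop) Y : (forall y, A y -> A' y) -> defA A Y -> defA A' Y.
Proof. move=> H [Z [s [HZ [Hs HY]]]]; exists Z, s; split=> //; split=> // y /Hs; exact: H. Qed.

Lemma defA_of0 A Y : def0 Y -> defA A Y.
Proof. move=> H; exists Y, [::]; split=> //; split=> // e; by rewrite params_nil. Qed.

Lemma defA_not A Y : defA A Y -> defA A (fun e => ~ Y e).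
Proof.
move=> [Z [s [HZ [Hs HY]]]]; exists (fun e => ~ Z e), s; split; first exact: def0_not.
split=> // e; have := HY e; tauto.
Qed.

Lemma defA_pull A (pi : nat -> nat) Y : defA A Y -> defA A (fun e => Y (fun k => e (pi k))).
Proof.
move=> [Z [s [HZ [Hs HY]]]].
exists (fun E => Z (fun k => E (if k < size s then k else size s + pi (k - size s)))), s.
split; first exact: (def0_pull (fun k => if k < size s then k else size s + pi (k - size s))).
split=> // e; by rewrite HY params_pull.
Qed.

Lemma defA_and A Y1 Y2 : defA A Y1 -> defA A Y2 -> defA A (fun e => Y1 e /\ Y2 e).
Proof.
move=> [Z1 [s1 [HZ1 [Hs1 HY1]]]] [Z2 [s2 [HZ2 [Hs2 HY2]]]].
pose p1 := fun k => if k < size s1 then k else k + size s2.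
exists (fun E => Z1 (fun k => E (p1 k)) /\ Z2 (fun k => E (size s1 + k))), (s1 ++ s2).
split; first by apply: def0_and; apply: def0_pull.
split; first by move=> y Hy; case: (List.in_app_or _ _ _ Hy) => [/Hs1|/Hs2].
move=> e; rewrite HY1 HY2.
have -> : params e s1 = (fun k => params e (s1 ++ s2) (p1 k)).
  apply: functional_extensionality => k; rewrite /params /p1 size_cat nth_cat.
  case: (ltnP k (size s1)) => H.
    have H' : k < size s1 + size s2 by lia.
    by rewrite H' H.
  have -> : (k + size s2 < size s1 + size s2) = false by lia.
  by congr e; lia.
have -> : params e s2 = (fun k => params e (s1 ++ s2) (size s1 + k)).
  apply: functional_extensionality => k; rewrite /params size_cat nth_cat.
  have -> : (size s1 + k < size s1) = false by lia.
  rewrite ltn_add2l addKn; case: ifP => H; first by apply: set_nth_default.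
  by congr e; lia.
by [].
Qed.

Lemma defA_ex A i Y : defA A Y -> defA A (fun e => exists a, Y (upd e i a)).
Proof.
move=> [Z [s [HZ [Hs HY]]]].
exists (fun E => exists a, Z (upd E (i + size s) a)), s.
split; first exact: def0_ex.
split=> // e; split=> -[a Ha]; exists a; move: Ha; by rewrite HY params_upd.
Qed.

Lemma defA_eq A i j : defA A (fun e => e i = e j).
Proof. apply: defA_of0; exact: def0_eq. Qed.

Lemma defA_rel A r vs : defA A (fun e => interp r (map e vs)).
Proof. apply: defA_of0; exact: def0_rel. Qed.

Lemma defA_const (A : M -> Prop) i c : A c -> defA A (fun e => e i = c).
Proof.
move=> Hc; exists (fun E => E (i.+1) = E 0), [:: c]; split; first exact: def0_eq.
split; first by move=> y [<-|].
by move=> e; rewrite /params /= subn1.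
Qed.

Lemma defA_prop A (Q : Prop) : defA A (fun _ => Q).
Proof.
case: (classic Q) => HQ.
  apply: (@defA_ext _ (fun e => e 0 = e 0)); first by move=> e; split.
  exact: defA_eq.
apply: (@defA_ext _ (fun e => ~ e 0 = e 0)); first by move=> e; split.
apply: defA_not; exact: defA_eq.
Qed.

Lemma defA_params (A B : M -> Prop) Y t : defA B Y -> (forall y, List.In y t -> A y) ->
  defA (fun y => A y \/ B y) (fun e => Y (params e t)).
Proof.
move=> [Z [s [HZ [Hs HY]]]] Ht; exists Z, (s ++ t); split=> //; split.
  by move=> y Hy; case: (List.in_app_or _ _ _ Hy) => [/Hs|/Ht]; tauto.
by move=> e; rewrite HY params_cat.
Qed.


Lemma defA_or A Y1 Y2 : defA A Y1 -> defA A Y2 -> defA A (fun e => Y1 e \/ Y2 e).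
Proof.
move=> H1 H2; apply: (@defA_ext _ (fun e => ~ (~ Y1 e /\ ~ Y2 e))).
  move=> e; tauto.
by apply: defA_not; apply: defA_and; apply: defA_not.
Qed.

Lemma defA_imp A Y1 Y2 : defA A Y1 -> defA A Y2 -> defA A (fun e => Y1 e -> Y2 e).
Proof.
move=> H1 H2; apply: (@defA_ext _ (fun e => ~ (Y1 e /\ ~ Y2 e))).
  move=> e; tauto.
by apply: defA_not; apply: defA_and => //; apply: defA_not.
Qed.

Lemma defA_iff A Y1 Y2 : defA A Y1 -> defA A Y2 -> defA A (fun e => Y1 e <-> Y2 e).
Proof. move=> H1 H2; apply: defA_and; exact: defA_imp. Qed.

Lemma defA_all A i Y : defA A Y -> defA A (fun e => forall a, Y (upd e i a)).
Proof.
move=> H; apply: (@defA_ext _ (fun e => ~ exists a, ~ Y (upd e i a))).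
  move=> e; split; last by move=> H1 [a]; apply.
  by move=> H1 a; apply: NNPP => H2; apply: H1; exists a.
by apply: defA_not; apply: (@defA_ex _ i (fun E => ~ Y E)); apply: defA_not.
Qed.

Definition ovr m (w e : nat -> M) := fun k => if k < m then w k else e k.

Lemma defA_exN A m Y : defA A Y -> defA A (fun e => exists w, Y (ovr m w e)).
Proof.
elim: m Y => [|m IH] Y HY.
  apply: defA_ext HY => e; split; first by move=> H; exists e.
  by case=> w; congr Y; apply: functional_extensionality => k.
have := defA_ex m (IH _ HY).
apply: defA_ext => e; split.
- case=> a [w Hw]; exists (upd w m a); congr Y: Hw.
  apply: functional_extensionality => k; rewrite /ovr /upd.
  case: (ltngtP k m) => H; case: ifP => //; lia.
- case=> w Hw; exists (w m), w; congr Y: Hw.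
  apply: functional_extensionality => k; rewrite /ovr /upd.
  case: (ltngtP k m) => H; try (case: ifP => //; lia).
  by rewrite H ltnSn.
Qed.

Lemma defA_bigand A m (T : nat -> (nat -> M) -> Prop) :
  (forall k, k < m -> defA A (T k)) -> defA A (fun e => forall k, k < m -> T k e).
Proof.
elim: m => [|m IH] H.
  apply: (@defA_ext _ (fun _ => True)); first by move=> e; split.
  exact: defA_prop.
apply: (@defA_ext _ (fun e => (forall k, k < m -> T k e) /\ T m e)).
  move=> e; split; first by case=> H1 H2 k; rewrite ltnS leq_eqVlt => /orP[/eqP->|/H1].
  move=> H1; split; last exact: H1.
  by move=> k Hk; apply: H1; apply: ltn_trans Hk _.
apply: defA_and; last exact: H.
by apply: IH => k Hk; apply: H; apply: ltn_trans Hk _.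
Qed.

Lemma params1 E (c : M) : params E [:: c] = upd (fun k => E (k - 1)) 0 c.
Proof.
apply: functional_extensionality => k; rewrite /params /upd /=.
by case: k.
Qed.

Lemma defA_trans_gen (B C : M -> Prop) s Y :
  defA B Y -> (forall y, List.In y s -> B y \/ C y) ->
  (forall c, C c -> defA B (fun e => e 0 = c)) ->
  defA B (fun e => Y (params e s)).
Proof.
elim: s Y => [|c s IH] Y HY Hs HC.
  by apply: defA_ext HY => e; rewrite params_nil.
have -> : (fun e => Y (params e (c :: s))) = (fun e => (fun E => Y (params E [:: c])) (params e s)).
  apply: functional_extensionality => e; by rewrite -params_cat.
apply: (IH (fun E => Y (params E [:: c]))); last by [].
  2: by move=> y Hy; apply: Hs; right.
case: (Hs c (or_introl erefl)) => Hc.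
  have := defA_params HY (t := [:: c]) (A := B).
  move=> /(_ _) H; apply: defA_mono (H _); first by move=> y [].
  by move=> y [<-|].
have H1 : defA B (fun E => exists a, upd E 0 a 0 = c /\ Y (upd E 0 a)).
  by apply: (@defA_ex _ 0 (fun E => E 0 = c /\ Y E)); apply: defA_and => //; apply: HC.
have := defA_pull (fun k => k - 1) H1.
apply: defA_ext => E; rewrite params1; split.
  by case=> a [Ha H]; rewrite /upd /= in Ha; subst a.
by move=> H; exists c.
Qed.

Lemma defA_trans (B C : M -> Prop) Y :
  defA (fun y => B y \/ C y) Y ->
  (forall c, C c -> defA B (fun e => e 0 = c)) -> defA B Y.
Proof.
move=> [Z [s [HZ [Hs HY]]]] HC.
apply: (defA_ext (fun e => iff_sym (HY e))).
by apply: defA_trans_gen HC => //; apply: defA_of0.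
Qed.

Lemma defA_split (B C : M -> Prop) s Y :
  defA B Y -> (forall y, List.In y s -> B y \/ C y) ->
  exists Y2 t, defA B Y2 /\ (forall y, List.In y t -> C y) /\
    forall e, Y (params e s) <-> Y2 (params e t).
Proof.
elim/last_ind: s => [|s c IH] HY Hs.
  by exists Y, [::]; split=> //; split=> // e; rewrite params_nil.
have Hs' : forall y, List.In y s -> B y \/ C y.
  by move=> y Hy; apply: Hs; rewrite -cats1; apply: List.in_or_app; left.
have Hc : B c \/ C c.
  by apply: Hs; rewrite -cats1; apply: List.in_or_app; right; left.
have [Y2 [t [HY2 [Ht H]]]] := IH HY Hs'.
have Hr : forall e, Y (params e (rcons s c)) <-> Y2 (params (params e [:: c]) t).
  by move=> e; rewrite -cats1 params_cat.
case: Hc => Hc.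
  pose pi := fun k => if k < size t then k.+1 else if k == size t then 0 else k.
  exists (fun E => Y2 (fun k => params E [:: c] (pi k))), t; split.
    have := defA_params (defA_pull pi HY2) (t := [:: c]) (A := B).
    move=> /(_ _) H1; apply: defA_mono (H1 _); first by move=> y [].
    by move=> y [<-|].
  split=> // e; rewrite Hr; suff -> : params (params e [:: c]) t = (fun k => params (params e t) [:: c] (pi k)) by [].
  apply: functional_extensionality => k; rewrite /params /pi /=.
  case: (ltngtP k (size t)) => Hk.
  - rewrite ltnS ltn0 subn1 /= Hk; by apply: set_nth_default.
  - have -> : (k - size t < 1) = false by lia.
    have -> : (k < 1) = false by lia.
    have -> : (k - 1 < size t) = false by lia.
    congr e; lia.
  - by rewrite Hk subnn.
exists Y2, (rcons t c); split=> //; split.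
  move=> y; rewrite -cats1 => Hy; case: (List.in_app_or _ _ _ Hy); first exact: Ht.
  by case=> // <-.
by move=> e; rewrite Hr -cats1 params_cat.
Qed.

Lemma nth_error_size (T : Type) (l : seq T) k (d : T) :
  k < size l -> List.nth_error l k = Some (nth d l k).
Proof. elim: l k => [|x l IH] [|k] //= Hk; exact: IH. Qed.

Lemma nth_error_some (T : Type) (l : seq T) k y :
  List.nth_error l k = Some y -> k < size l /\ forall d, nth d l k = y.
Proof. elim: l k => [|x l IH] [|k] //=; first by case=> ->. move/IH => [H1 H2]; split=> //. Qed.

Lemma definable_defA A n (X : ('I_n -> M) -> Prop) :
  definable A X <-> defA A (fun e => X (fun i => e i)).
Proof.
split.
- case=> f [b [Hb H]].
  pose m := size b.
  pose rho := fun i => if i < n then m + i else if i < n + m then i - n else i.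
  have Hinj : injective rho.
    move=> x y; rewrite /rho; case: ifP; case: ifP; try case: ifP; try case: ifP; lia.
  exists (fun E => sat E (ren rho f)), b; split; first by exists (ren rho f).
  split=> // e; rewrite sat_ren //; apply: H.
    move=> i /=; rewrite /rho ltn_ord /params ifF; last lia.
    by rewrite addKn.
  move=> k y Hky; have [Hk Hy] := nth_error_some Hky; rewrite /rho ifF; last lia.
  rewrite ifT; last lia.
  by rewrite /params addKn Hk Hy.
- case=> Z [s [[f Hf] [Hs HY]]].
  pose m := size s.
  pose rho := fun k => if k < m then n + k else if k < m + n then k - m else k.
  have Hinj : injective rho.
    move=> x y; rewrite /rho; case: ifP; case: ifP; try case: ifP; try case: ifP; lia.
  exists (ren rho f), s; split=> // x e Hx He.
  rewrite sat_ren //.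
  pose e2 := fun j => if j < n then e j else e (j + m).
  have -> : (fun k => e (rho k)) = params e2 s.
    apply: functional_extensionality => k; rewrite /rho /params /e2 -/m.
    case: ifP => H1.
      by apply: He; apply: nth_error_size.
    case: ifP => H2.
      rewrite ifT; last lia. by [].
    rewrite ifF; last lia. congr e; lia.
  rewrite -Hf -HY; suff -> : (fun i : 'I_n => e2 i) = x by [].
  apply: functional_extensionality => i.
  by rewrite /e2 ltn_ord Hx.
Qed.



End Gen.

Lemma In_nth (T : Type) (l : seq T) d k : k < size l -> List.In (nth d l k) l.
Proof. elim: l k => [|x l IH] [|k] //= Hk; [by left | right; exact: IH]. Qed.

Lemma definable_ext (S : Structure) (A : car S -> Prop) n (X X' : ('I_n -> car S) -> Prop) :
  (forall x, X x <-> X' x) -> definable A X -> definable A X'.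
Proof. move=> H [f [b [Hb Hf]]]; exists f, b; split=> // x e H1 H2; rewrite -H; exact: Hf. Qed.

Lemma definable_mono (S : Structure) (A A' : car S -> Prop) n (X : ('I_n -> car S) -> Prop) :
  (forall y, A y -> A' y) -> definable A X -> definable A' X.
Proof. move=> H [f [b [Hb Hf]]]; exists f, b; split=> // y /Hb; exact: H. Qed.

Lemma dclS_mono (S : Structure) (A A' : car S -> Prop) a :
  (forall y, A y -> A' y) -> dclS A a -> dclS A' a.
Proof. exact: definable_mono. Qed.

Lemma dclS_defA (S : Structure) (A : car S -> Prop) a :
  dclS A a <-> defA A (fun e => e 0 = a).
Proof. exact: definable_defA. Qed.

Section Trans.
Variable S : Structure.
Variables P D : car S -> Prop.
Notation M := (car S).
Notation SP := (@expandP S P).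
Notation SI := (@PInd S P D).
Notation Pt := (car SI).

Fixpoint liftF (f : formula (sym S)) : formula (sym SP) :=
  match f with
  | FEq i j => FEq _ i j
  | FRel r vs => @FRel (sym SP) (Some r) vs
  | FNot g => FNot (liftF g)
  | FAnd g h => FAnd (liftF g) (liftF h)
  | FEx i g => FEx i (liftF g)
  end.

Lemma sat_liftF (e : nat -> M) f : @sat SP e (liftF f) <-> @sat S e f.
Proof.
elim: f e => [i j|r vs|g IH|g IHg h IHh|i g IH] e /=; try by [].
- have := IH e; tauto.
- have := IHg e; have := IHh e; tauto.
- by split=> -[a Ha]; exists a; apply/IH.
Qed.

Lemma defA_liftP A Y : @defA S A Y -> @defA SP A Y.
Proof.
move=> [Z [s [[f Hf] [Hs HY]]]]; exists Z, s; split=> //.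
by exists (liftF f) => e; rewrite sat_liftF.
Qed.

Lemma defA_Pat A i : @defA SP A (fun E => P (E i)).
Proof. exact: (@defA_rel SP A None [:: i]). Qed.

Lemma val_inj' (x y : Pt) : proj1_sig x = proj1_sig y -> x = y.
Proof. case: x => x Hx; case: y => y Hy /= Hxy; subst y; congr exist; apply: proof_irrelevance. Qed.

Lemma interp_PInd (r : sym SI) (l : seq Pt) (d : Pt) :
  interp r l <-> size l = pis_n r /\ @pis_Y S D r (fun i => proj1_sig (nth d l i)).
Proof.
rewrite /=; split.
- case=> Hs [x [Hx HY]]; split=> //; congr (pis_Y _): HY.
  apply: functional_extensionality => i.
  by have [_ ->] := nth_error_some (Hx i).
- case=> Hs HY; split=> //; exists (fun i => nth d l i); split=> //.
  by move=> i; apply: nth_error_size; rewrite Hs.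
Qed.

Lemma val_upd (e : nat -> Pt) i a :
  (fun k => proj1_sig (upd e i a k)) = upd (fun k => proj1_sig (e k)) i (proj1_sig a).
Proof. apply: functional_extensionality => k; rewrite /upd; by case: eqP. Qed.

Lemma translate (g : formula (sym SI)) :
  exists Z, @defA SP D Z /\ forall e : nat -> Pt, Z (fun k => proj1_sig (e k)) <-> sat e g.
Proof.
elim: g => [i j|r vs|g [Z [HZ H]]|g [Z [HZ H]] h [Z' [HZ' H']]|i g [Z [HZ H]]].
- exists (fun E => E i = E j); split; first exact: defA_eq.
  move=> e /=; split; [exact: val_inj' | by move->].
- have Hr := defA_liftP (iffLR (definable_defA _ _) (pis_def r)).
  exists (fun E => size vs = pis_n r /\ @pis_Y S D r (fun i => E (nth 0 vs i))); split.
    apply: defA_and; first exact: defA_prop.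
    exact: (defA_pull (fun k => nth 0 vs k) Hr).
  move=> e; change (sat e (FRel r vs)) with (interp r (map e vs)); rewrite (interp_PInd r (map e vs) (e 0)) size_map.
  split=> -[Hs HY]; split=> //; congr (pis_Y _): HY; apply: functional_extensionality => k;
   rewrite (nth_map 0) //; rewrite Hs; exact: ltn_ord.
- exists (fun E => ~ Z E); split; first exact: defA_not.
  move=> e /=; have := H e; tauto.
- exists (fun E => Z E /\ Z' E); split; first exact: defA_and.
  move=> e /=; have := H e; have := H' e; tauto.
- exists (fun E => exists a, P (upd E i a i) /\ Z (upd E i a)); split.
    apply: (@defA_ex SP D i (fun E => P (E i) /\ Z E)); apply: defA_and => //.
    exact: defA_Pat.
  move=> e /=; split.
  + case=> a []; rewrite /upd eqxx -/(upd _ i a) => Pa HZa.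
    exists (exist P a Pa); apply/H; by rewrite val_upd.
  + case=> a Ha; exists (proj1_sig a); split.
      by rewrite /upd eqxx; exact: (proj2_sig a).
    by rewrite -val_upd; apply/H.
Qed.

End Trans.

Section Dirs.
Variable S : Structure.
Notation M := (car S).
Variable lt : M -> M -> Prop.
Hypothesis lt_irr : forall x, ~ lt x x.
Hypothesis lt_total : forall x y, lt x y \/ x = y \/ lt y x.
Hypothesis noend : forall x, (exists l, lt l x) /\ (exists h, lt x h).
Variables P D : M -> Prop.
Notation SP := (@expandP S P).
Notation SI := (@PInd S P D).
Notation Pt := (car SI).

Lemma closure_single (a : M) (x : 'I_1 -> M) :
  Defs.closure lt (fun y : 'I_1 -> M => y ord0 = a) x <-> x ord0 = a.
Proof.
have H1 : forall i : 'I_1, i = ord0 by move=> i; apply: val_inj; case: i => [[]].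
split.
- move=> Hc; case: (lt_total a (x ord0)) => [H|[//|H]].
  + have [_ [h Hh]] := noend (x ord0).
    have [y [Hy Hb]] := Hc (fun _ => a) (fun _ => h) (fun i => ltac:(by rewrite (H1 i))).
    by case: (Hb ord0); rewrite Hy => /lt_irr.
  + have [[l Hl] _] := noend (x ord0).
    have [y [Hy Hb]] := Hc (fun _ => l) (fun _ => a) (fun i => ltac:(by rewrite (H1 i))).
    by case: (Hb ord0); rewrite Hy => _ /lt_irr.
- move=> Hx lo hi Hb; exists x; split=> //.
Qed.

Lemma val_params (E : nat -> Pt) s :
  (fun k => proj1_sig (params E s k)) = params (fun k => proj1_sig (E k)) (map (@proj1_sig _ _) s).
Proof.
apply: functional_extensionality => k; rewrite /params size_map; case: ifP => // H.
by rewrite (nth_map (E 0)).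
Qed.

Lemma dirA (A : M -> Prop) (a : M) : OP lt P -> dcl_indep D P -> (forall y, A y -> P y) ->
  clD P D A a -> dclS (fun y => A y \/ D y) a.
Proof.
move=> Hop Hind HA [Pa H].
move/(iffLR (definable_defA _ _)): H => /= [Z [s [[g Hg] [Hs HY]]]].
have [Zt [HZt Ht]] := translate g.
pose W := fun e : nat -> M => P (e 0) /\ Zt (params (fun _ => e 0) (map (@proj1_sig _ _) s)).
have HW : @defA SP (fun y => A y \/ D y) W.
  apply: defA_and; first exact: defA_Pat.
  have H' : @defA SP (fun y => A y \/ D y) (fun E => Zt (params E (map (@proj1_sig _ _) s))).
    apply: defA_params => // y /List.in_map_iff [p [<- Hp]].
    exact: Hs.
  exact: (defA_pull (fun _ => 0) H').
have HWe : forall e, W e <-> e 0 = a.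
  move=> e; split.
  - case=> Pe HZ.
    have := iffLR (Ht (@params SI (fun _ => (exist P (e 0) Pe : Pt)) s)).
    rewrite val_params /= => /(_ HZ) /Hg /HY /= Heq.
    by have := f_equal (@proj1_sig _ _) Heq.
  - move=> He; have Pe : P (e 0) by rewrite He.
    split=> //.
    have -> : (fun _ : nat => e 0) = (fun k => proj1_sig ((fun _ : nat => (exist P (e 0) Pe : Pt)) k)) by [].
    rewrite -val_params; apply/Ht/Hg/HY => /=. apply: (@val_inj' S P D). exact: He.
have Hdef : @definable SP (fun y => A y \/ D y) 1 (fun x => x ord0 = a).
  apply/definable_defA; apply: defA_ext HW => e /=; exact: HWe.
have Hind' : dcl_indep (fun y => (A y \/ D y) /\ ~ P y) P.
  move=> y [[/HA Py|Dy] nPy]; first by [].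
  move=> Hd; apply: (Hind y Dy); move: Hd; apply: dclS_mono => z.
  case=> [[[[/HA Pz|Dz] nPz] Hne]|Pz]; by [left|right|].
have := Hop _ Hind' 1 _ Hdef.
apply: definable_ext => x; exact: closure_single.
Qed.

Definition liftP (a : M) (Pa : P a) (y : M) : Pt :=
  match excluded_middle_informative (P y) with
  | left H => exist P y H
  | right _ => exist P a Pa
  end.

Lemma liftP_val a Pa y : P y -> proj1_sig (@liftP a Pa y) = y.
Proof. rewrite /liftP; by case: excluded_middle_informative. Qed.

Lemma dirB (A : M -> Prop) (a : M) : (forall y, A y -> P y) ->
  dclS (fun y => A y \/ D y) a -> P a -> clD P D A a.
Proof.
move=> HA /dclS_defA [Z [s [HZ [Hs HY]]]] Pa.
have [Y2 [t [HY2 [Ht Hsplit]]]] := @defA_split S D A s Z (defA_of0 _ HZ)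
   (fun y Hy => proj1 (or_comm _ _) (Hs y Hy)).
have HY2a : forall e, e 0 = a <-> Y2 (params e t) by move=> e; rewrite HY Hsplit.
pose k := size t.
pose pY := fun z : 'I_k.+1 -> M => Y2 (fun j => if j < k then z (inord j) else z (inord k)).
have Hpdef : definable D pY.
  apply/definable_defA.
  apply: defA_ext (defA_pull (fun j => if j < k then j else k) HY2) => e.
  rewrite /pY; suff -> : (fun j => if j < k then e (@inord k j) else e (@inord k k))
     = (fun j => e (if j < k then j else k)) by [].
  apply: functional_extensionality => j; case: ifP => Hj; rewrite inordK //; lia.
pose r := MkPIndSym Hpdef.
pose tt := map (@liftP a Pa) t.
exists Pa; apply/dclS_defA.
have H0 : @defA SI (fun p => A (proj1_sig p)) (fun e => @interp SI r (map (params e tt) (iota 0 k.+1))).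
  have := @defA_params SI (fun p => A (proj1_sig p)) (fun p => A (proj1_sig p))
     (fun E => @interp SI r (map E (iota 0 k.+1))) tt (defA_rel _ _ _).
  move=> /(_ _) H1; apply: defA_mono (H1 _); first by move=> y [].
  move=> y /List.in_map_iff [x [<- Hx]]; rewrite liftP_val; [exact: Ht | exact: HA (Ht _ Hx)].
apply: defA_ext H0 => e.
rewrite (interp_PInd r _ (e 0)) size_map size_iota.
have -> : (fun i : 'I_(pis_n r) => proj1_sig (nth (e 0) (map (params e tt) (iota 0 k.+1)) i))
   = (fun i : 'I_k.+1 => proj1_sig (params e tt i)).
  apply: functional_extensionality => i; rewrite (nth_map 0) ?size_iota //.
  by rewrite nth_iota.
rewrite /= /pY.
have -> : (fun j => if j < k then proj1_sig (params e tt (@inord k j)) else proj1_sig (params e tt (@inord k k)))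
   = params (fun _ => proj1_sig (e 0)) t.
  apply: functional_extensionality => j; rewrite /params /tt size_map -/k.
  case: ifP => Hj; rewrite inordK; try lia.
    rewrite Hj (nth_map a) //; rewrite liftP_val; first by apply: set_nth_default.
    by apply: HA; apply: Ht; apply: In_nth.
  by rewrite ltnn subnn.
rewrite -HY2a; split; last by move=> ->.
by move=> [_ H]; apply: (@val_inj' S P D).
Qed.

End Dirs.


Section Ord.
Variable M : Type.
Variable R : M -> M -> Prop.
Hypothesis Rirr : forall x, ~ R x x.
Hypothesis Rtr : forall x y z, R x y -> R y z -> R x z.
Hypothesis Rtot : forall x y, R x y \/ x = y \/ R y x.
Hypothesis Rnoend : forall x, (exists l, R l x) /\ (exists h, R x h).
Hypothesis Rdense : forall x y, R x y -> exists z, R x z /\ R z y.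

Definition le x y := R x y \/ x = y.

Lemma le_R_tr x y z : le x y -> R y z -> R x z.
Proof. case=> [H|->] //; exact: Rtr. Qed.
Lemma R_le_tr x y z : R x y -> le y z -> R x z.
Proof. move=> H [H'|<-] //; exact: Rtr H H'. Qed.
Lemma le_tr x y z : le x y -> le y z -> le x z.
Proof. case=> [H|->] // H'; left; exact: R_le_tr H H'. Qed.
Lemma notR_le x y : ~ R x y -> le y x.
Proof. move=> H; case: (Rtot x y) => [/H []|[->|Hyx]]; [by right|by left]. Qed.
Lemma R_notR x y : R x y -> ~ R y x.
Proof. move=> H H'; exact: Rirr (Rtr H H'). Qed.
Lemma le_notR x y : le x y -> ~ R y x.
Proof. case=> [|->]; [exact: R_notR | exact: Rirr]. Qed.

Definition decomp (X : M -> Prop) := exists pts ivs, forall t, X t <->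
  List.In t pts \/ exists iv, List.In iv ivs /\ lower_ok R iv.1 t /\ upper_ok R iv.2 t.

Definition bd (X : M -> Prop) t := forall lo hi, R lo t -> R t hi ->
  (exists z, R lo z /\ R z hi /\ X z) /\ (exists z, R lo z /\ R z hi /\ ~ X z).

Lemma below_list (L : seq M) t : exists lo, R lo t /\ forall e, List.In e L -> R e t -> le e lo.
Proof.
elim: L => [|e L [lo' [H1 H2]]].
  by have [[l Hl] _] := Rnoend t; exists l; split.
case: (classic (R e t)) => He; last first.
  by exists lo'; split=> // e' [<-|/H2]. 
case: (Rtot e lo') => [Hl|[Hl|Hl]].
- exists lo'; split=> // e' [<-|/H2] //; by left.
- exists lo'; split=> // e' [<-|/H2] //; by right.
- exists e; split=> // e' [<-|Hin He']; first by right.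
  apply: le_tr (H2 _ Hin He') _; by left.
Qed.

Lemma above_list (L : seq M) t : exists hi, R t hi /\ forall e, List.In e L -> R t e -> le hi e.
Proof.
elim: L => [|e L [hi' [H1 H2]]].
  by have [_ [h Hh]] := Rnoend t; exists h; split.
case: (classic (R t e)) => He; last first.
  by exists hi'; split=> // e' [<-|/H2].
case: (Rtot e hi') => [Hl|[Hl|Hl]].
- exists e; split=> // e' [<-|Hin He']; first by right.
  apply: le_tr _ (H2 _ Hin He'); by left.
- exists hi'; split=> // e' [<-|/H2] //; by right.
- exists hi'; split=> // e' [<-|/H2] //; by left.
Qed.

Lemma list_min (L : seq M) (Q : M -> Prop) : (exists t, List.In t L /\ Q t) ->
  exists m, List.In m L /\ Q m /\ forall t, List.In t L -> Q t -> ~ R t m.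
Proof.
elim: L => [|e L IH]; first by case=> t [[]].
case=> t [Ht Qt].
case: (classic (exists t, List.In t L /\ Q t)) => HL; last first.
  case: Ht => [Het|Ht]; last by case: HL; exists t.
  subst t; exists e; split; first by left.
  split=> // t' [<-|Ht'] Qt'; first exact: Rirr.
  by case: HL; exists t'.
have [m [Hm [Qm Hmin]]] := IH HL.
case: (classic (Q e /\ R e m)) => [[Qe Hem]|Hn].
  exists e; split; first by left.
  split=> // t' [<-|Ht'] Qt'; first exact: Rirr.
  move=> H; apply: (Hmin _ Ht' Qt'); exact: Rtr H Hem.
exists m; split; first by right.
split=> // t' [<-|Ht'] Qt'; last exact: Hmin.
by move=> H; apply: Hn.
Qed.

Fixpoint lows (ivs : seq (option M * option M)) : seq M :=
  if ivs is iv :: ivs' then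
    (if iv.1 is Some l then l :: lows ivs' else lows ivs') else [::].
Fixpoint ups (ivs : seq (option M * option M)) : seq M :=
  if ivs is iv :: ivs' then
    (if iv.2 is Some l then l :: ups ivs' else ups ivs') else [::].

Lemma in_lows ivs l u : List.In (Some l, u) ivs -> List.In l (lows ivs).
Proof.
elim: ivs => [|[l' u'] ivs IH] //= [[-> _]|/IH H]; first by left.
by case: l' => [l'|] //; right.
Qed.

Lemma in_ups ivs l u : List.In (l, Some u) ivs -> List.In u (ups ivs).
Proof.
elim: ivs => [|[l' u'] ivs IH] //= [[_ ->]|/IH H]; first by left.
by case: u' => [u'|] //; right.
Qed.

Lemma inf_exists (X : M -> Prop) x0 lb : decomp X -> X x0 -> (forall t, X t -> ~ R t lb) ->
  exists c, (forall t, X t -> ~ R t c) /\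
            forall h, R c h -> exists s, X s /\ ~ R s c /\ R s h.
Proof.
move=> [pts [ivs HX]] Hx0 Hlb.
have noNone : forall u t, List.In (None, u) ivs -> upper_ok R u t -> False.
  move=> u t Hiv Hu.
  have [[l Hl] _] := Rnoend lb.
  have Hlt : R l t.
    case: (Rtot t lb) => [H|[->//|H]]; first by case: (Hlb t (proj2 (HX t) (or_intror (ex_intro _ (None,u) (conj Hiv (conj I Hu)))))).
    exact: Rtr Hl H.
  apply: (Hlb l); last exact: Hl.
  apply/HX; right; exists (None, u); split=> //; split=> //.
  by case: u Hiv Hu => [u'|] //= _ Hu'; exact: Rtr Hlt Hu'.
pose Q := fun c => (List.In c pts /\ X c) \/
   (exists u, List.In (Some c, u) ivs /\ exists t, R c t /\ upper_ok R u t).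
pose L := pts ++ lows ivs.
have HQL : forall c, Q c -> List.In c L.
  move=> c [[H _]|[u [H _]]]; apply: List.in_or_app; [left|right]; first by [].
  exact: in_lows H.
have [m [HmL [Qm Hmin]]] : exists m, List.In m L /\ Q m /\ forall t, List.In t L -> Q t -> ~ R t m.
  apply: list_min.
  case: (proj1 (HX x0) Hx0) => [Hp|[[[l|] u] [Hiv [Hl Hu]]]].
  - have Qx : Q x0 by left.
    by exists x0; split; [exact: HQL|].
  - exists l; split; last by right; exists u; split=> //; exists x0.
    by apply: HQL; right; exists u; split=> //; exists x0.
  - by case: (noNone _ _ Hiv Hu).
exists m; split.
- move=> t Ht; case: (proj1 (HX t) Ht) => [Hp|[[[l|] u] [Hiv [Hl Hu]]]].
  + have Qt : Q t by left.
    exact: Hmin (HQL _ Qt) Qt.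
  + have Ql : Q l by right; exists u; split=> //; exists t.
    have := Hmin _ (HQL _ Ql) Ql => Hlm Htm; apply: Hlm; exact: Rtr Hl Htm.
  + by case: (noNone _ _ Hiv Hu).
- move=> h Hmh; case: Qm => [[_ Xm]|[u [Hiv [t [Hmt Hu]]]]].
    by exists m; split=> //; split=> //; exact: Rirr.
  have [t' [Hmt' [Ht't Ht'h]]] : exists t', R m t' /\ le t' t /\ le t' h.
    case: (Rtot t h) => [H|[<-|H]].
    + exists t; split=> //; split; [by right | by left].
    + by exists t; split=> //; split; right.
    + exists h; split=> //; split; [by left | by right].
  have [s [Hms Hst']] := Rdense Hmt'.
  exists s; split; last split.
  + apply/HX; right; exists (Some m, u); split=> //; split=> //=.
    case: u Hiv Hu => //= u' _ Htu; apply: Rtr (R_le_tr Hst' Ht't) Htu.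
  + exact: R_notR.
  + exact: R_le_tr Hst' Ht'h.
Qed.

Lemma bd_finite X : decomp X -> exists L, forall t, bd X t -> List.In t L.
Proof.
move=> [pts [ivs HX]]; exists (pts ++ lows ivs ++ ups ivs) => t Hbd.
apply: NNPP => HtL.
set L := pts ++ lows ivs ++ ups ivs in HtL.
have [lo [Hlo Hlo']] := below_list L t.
have [hi [Hhi Hhi']] := above_list L t.
have key : forall c z, List.In c L -> R lo z -> R z hi ->
    (R c z <-> R c t) /\ (R z c <-> R t c).
  move=> c z Hc Hz1 Hz2.
  case: (Rtot c t) => [H|[Hct|H]]; first last.
  - have Hle := Hhi' _ Hc H.
    have Hzc : R z c by exact: R_le_tr Hz2 Hle.
    by split; split=> // H'; [case: (R_notR Hzc H') | case: (R_notR H H')].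
  - by subst c; case: HtL.
  - have Hle := Hlo' _ Hc H.
    have Hcz : R c z by exact: le_R_tr Hle Hz1.
    by split; split=> // H'; [case: (R_notR Hcz H') | case: (R_notR H H')].
have inL1 : forall c, List.In c pts -> List.In c L.
  by move=> c Hc; apply: List.in_or_app; left.
have inL2 : forall c u, List.In (Some c, u) ivs -> List.In c L.
  move=> c u Hc; apply: List.in_or_app; right; apply: List.in_or_app; left; exact: in_lows Hc.
have inL3 : forall c l, List.In (l, Some c) ivs -> List.In c L.
  move=> c l Hc; apply: List.in_or_app; right; apply: List.in_or_app; right; exact: in_ups Hc.
have same : forall z, R lo z -> R z hi -> (X z <-> X t).
  move=> z Hz1 Hz2; rewrite !HX.
  have Hpz : ~ List.In z pts.
    move=> Hz; have [k1 k2] := key z z (inL1 _ Hz) Hz1 Hz2.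
    have H1 : ~ R z t by move=> H; exact: Rirr z (proj2 k1 H).
    have H2 : ~ R t z by move=> H; exact: Rirr z (proj2 k2 H).
    case: (Rtot z t) => [//|[Hzt|//]]; subst z; by apply: HtL; apply: inL1.
  have Hpt : ~ List.In t pts by move=> H; apply: HtL; apply: inL1.
  have Hiv : forall iv, List.In iv ivs ->
      (lower_ok R iv.1 z /\ upper_ok R iv.2 z <-> lower_ok R iv.1 t /\ upper_ok R iv.2 t).
    move=> [l u] Hin /=.
    have E1 : lower_ok R l z <-> lower_ok R l t.
      case: l Hin => [l|] Hin //=; exact: (proj1 (key l z (inL2 _ _ Hin) Hz1 Hz2)).
    have E2 : upper_ok R u z <-> upper_ok R u t.
      case: u Hin => [u|] Hin //=; exact: (proj2 (key u z (inL3 _ _ Hin) Hz1 Hz2)).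
    tauto.
  split=> -[H|[iv [Hin Hb]]]; try by [].
    by right; exists iv; split=> //; apply/Hiv.
  by right; exists iv; split=> //; apply/Hiv.
have [[z1 [Hz1 [Hz1' Xz1]]] [z2 [Hz2 [Hz2' Xz2]]]] := Hbd lo hi Hlo Hhi.
apply: Xz2; apply/(same _ Hz2 Hz2')/(same _ Hz1 Hz1'); exact: Xz1.
Qed.

Lemma dense2 lo b c : R lo c -> R b c -> exists t, R lo t /\ R b t /\ R t c.
Proof.
move=> H1 H2.
have [m [Hm1 [Hm2 Hmc]]] : exists m, le lo m /\ le b m /\ R m c.
  case: (Rtot lo b) => [H|[<-|H]].
  - exists b; split; [by left|split; [by right|by []]].
  - exists lo; split; [by right|split; [by right|by []]].
  - exists lo; split; [by right|split; [by left|by []]].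
have [t [Hmt Htc]] := Rdense Hmc.
exists t; split; [exact: le_R_tr Hm1 Hmt|split; [exact: le_R_tr Hm2 Hmt|exact: Htc]].
Qed.

Lemma connect (Vc : M -> M -> Prop) (Lc : M -> Prop) a b y :
  (forall c c' z, Vc c z -> Vc c' z -> c = c') ->
  (forall t, Lc t <-> exists c lo hi, R lo t /\ R t hi /\ forall z, R lo z -> R z hi -> Vc c z) ->
  Lc b -> Vc a b -> R b y ->
  (forall c, R b c -> le c y -> ~ bd Lc c) ->
  decomp (fun t => le b t /\ le t y /\ ~ Vc a t) ->
  Vc a y.
Proof.
move=> HVu HL HLb HVb Hby Hnobd Hdec.
apply: NNPP => Hy.
pose S' := fun t => le b t /\ le t y /\ ~ Vc a t.
have [c [Hc1 Hc2]] : exists c, (forall t, S' t -> ~ R t c) /\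
            forall h, R c h -> exists s, S' s /\ ~ R s c /\ R s h.
  apply: (@inf_exists S' y b Hdec).
    by split; [by left|split; [by right|by []]].
  by move=> t [Ht _]; apply: le_notR.
have Hbc : le b c.
  apply: notR_le => Hcb.
  have [s [[Hs _] [_ Hsb]]] := Hc2 _ Hcb.
  exact: le_notR Hs Hsb.
have Hcy : le c y by apply: notR_le; apply: Hc1; split; [by left|split; [by right|by []]].
have key : forall t, le b t -> R t c -> Vc a t.
  move=> t Hbt Htc; apply: NNPP => Hn; apply: (Hc1 t) => //.
  split=> //; split=> //; left; exact: R_le_tr Htc Hcy.
case: (classic (Lc c)) => HLc.
- have [c0 [lo [hi [Hlo [Hhi Hv]]]]] := proj1 (HL c) HLc.
  have Hc0 : c0 = a.
    case: Hbc => [Hbc|Hbc].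
      have [t [Hlot [Hbt Htc]]] := dense2 Hlo Hbc.
      apply: (HVu _ _ t); first apply: Hv => //; first exact: Rtr Htc Hhi.
      by apply: key => //; left.
    subst c; exact: HVu (Hv _ Hlo Hhi) HVb.
  subst c0.
  have [s [[_ [_ Hs]] [Hsc Hsh]]] := Hc2 _ Hhi.
  apply: Hs; apply: Hv; [exact: R_le_tr Hlo (notR_le Hsc) | exact: Hsh].
- case: Hbc => [Hbc|Hbc]; last by subst c.
  apply: (Hnobd c Hbc Hcy) => lo hi Hlo Hhi; split; last by exists c.
  have [t [Hlot [Hbt Htc]]] := dense2 Hlo Hbc.
  exists t; split=> //; split; first exact: Rtr Htc Hhi.
  apply/HL; exists a, b, c; split=> //; split=> // z Hbz Hzc.
  apply: key => //; by left.
Qed.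

End Ord.

Lemma upper_bound (M : Type) (R : M -> M -> Prop)
  (Rtr : forall x y z, R x y -> R y z -> R x z)
  (Rtot : forall x y, R x y \/ x = y \/ R y x)
  (Rnoend : forall x, (exists l, R l x) /\ (exists h, R x h)) (x0 : M) (L : seq M) :
  exists w, forall c, List.In c L -> R c w.
Proof.
elim: L => [|e L [w Hw]]; first by exists x0.
case: (Rtot e w) => [H|[Hew|H]].
- by exists w => c [<-|/Hw].
- have [_ [h Hh]] := Rnoend e.
  by exists h => c [<-|/Hw H] //; rewrite -Hew in H; exact: Rtr _ _ _ H Hh.
- have [_ [h Hh]] := Rnoend e.
  exists h => c [<-|/Hw H'] //; exact: Rtr _ _ _ H' (Rtr _ _ _ H Hh).
Qed.

Lemma remove_one (M : Type) (L : seq M) m : List.In m L ->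
  exists L', size L' < size L /\ forall z, List.In z L -> z <> m -> List.In z L'.
Proof.
elim: L => [|x L IH] //= Hm.
case: (classic (x = m)) => Hxm.
  by exists L; split=> // z [<-|]. 
case: Hm => [/Hxm //|/IH [L' [HL' HL]]].
exists (x :: L'); split=> // z [<-|Hz] Hzm; [by left|right; exact: HL].
Qed.


Section Omin.
Variable S : Structure.
Notation M := (car S).
Variables (lt : M -> M -> Prop) (add : M -> M -> M) (zero one : M).
Hypothesis Hom : omin_ordered_group lt add zero one.

Lemma Hlt_def : definable (fun _ => False) (fun x : 'I_2 -> M => lt (x ord0) (x ord_max)).
Proof. by case: Hom. Qed.
Lemma Hadd_def : definable (fun _ => False)
    (fun x : 'I_3 -> M => add (x ord0) (x (inord 1)) = x ord_max).
Proof. by case: Hom => _ []. Qed.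
Lemma lt_irr : forall x, ~ lt x x.
Proof. by case: Hom => _ [_ [_ [_ []]]]. Qed.
Lemma lt_tr : forall x y z, lt x y -> lt y z -> lt x z.
Proof. by case: Hom => _ [_ [_ [_ [_ []]]]]. Qed.
Lemma lt_tot : forall x y, lt x y \/ x = y \/ lt y x.
Proof. by case: Hom => _ [_ [_ [_ [_ [_ []]]]]]. Qed.
Lemma add_assoc : forall x y z, add x (add y z) = add (add x y) z.
Proof. by case: Hom => _ [_ [_ [_ [_ [_ [_ []]]]]]]. Qed.
Lemma add_unit : forall x, add zero x = x /\ add x zero = x.
Proof. by case: Hom => _ [_ [_ [_ [_ [_ [_ [_ []]]]]]]]. Qed.
Lemma add_inv : forall x, exists y, add x y = zero /\ add y x = zero.
Proof. by case: Hom => _ [_ [_ [_ [_ [_ [_ [_ [_ []]]]]]]]]. Qed.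
Lemma compat : forall x y z, lt x y -> lt (add z x) (add z y) /\ lt (add x z) (add y z).
Proof. by case: Hom => _ [_ [_ [_ [_ [_ [_ [_ [_ [_ []]]]]]]]]]. Qed.
Lemma lt01 : lt zero one.
Proof. by case: Hom => _ [_ [_ [_ [_ [_ [_ [_ [_ [_ [_ []]]]]]]]]]]. Qed.
Lemma omin : forall X : ('I_1 -> M) -> Prop, definable (fun _ => True) X ->
     exists (pts : seq M) (ivs : seq (option M * option M)),
       forall x, X x <-> (List.In (x ord0) pts \/
          exists iv, List.In iv ivs /\ lower_ok lt iv.1 (x ord0) /\ upper_ok lt iv.2 (x ord0)).
Proof. by case: Hom => _ [_ [_ [_ [_ [_ [_ [_ [_ [_ [_ []]]]]]]]]]]. Qed.

Lemma noend x : (exists l, lt l x) /\ (exists h, lt x h).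
Proof.
split.
- have [y [H1 H2]] := add_inv one.
  have := (compat y lt01).2; rewrite (add_unit y).1 H1 => Hy0.
  exists (add x y); have := (compat x Hy0).1; by rewrite (add_unit x).2.
- exists (add x one); have := (compat x lt01).1; by rewrite (add_unit x).2.
Qed.

Lemma defA_lt (B : M -> Prop) i j : defA B (fun e => lt (e i) (e j)).
Proof.
have := iffLR (definable_defA _ _) Hlt_def => /= H.
have := defA_pull (fun k => if k == 0 then i else j) H.
move=> /(defA_mono (A' := B) (fun y (F : False) => match F with end)).
by apply: defA_ext.
Qed.

Lemma defA_add (B : M -> Prop) i j k : defA B (fun e => add (e i) (e j) = e k).
Proof.
have := iffLR (definable_defA _ _) Hadd_def => /= H.
have := defA_pull (fun l => if l == 0 then i else if l == 1 then j else k) H.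
move=> /(defA_mono (A' := B) (fun y (F : False) => match F with end)).
apply: defA_ext => e /=; by rewrite inordK.
Qed.

Lemma decomp_of (B : M -> Prop) X : defA B (fun e => X (e 0)) -> decomp lt X.
Proof.
move=> H.
have H' : definable (fun _ => True) (fun x : 'I_1 -> M => X (x ord0)).
  by apply/definable_defA; apply: defA_mono H.
have [pts [ivs Hd]] := omin H'.
by exists pts, ivs => t; apply: (Hd (fun _ => t)).
Qed.

Lemma defA_at (B : M -> Prop) X i : defA B (fun e => X (e 0)) -> defA B (fun e => X (e i)).
Proof. move=> H; exact: (defA_pull (fun _ => i) H). Qed.

Lemma dense x y : lt x y -> exists z, lt x z /\ lt z y.
Proof.
move=> Hxy; apply: NNPP => Hn.
have [ix [Hix1 Hix2]] := add_inv x.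
pose e := add ix y.
have He0 : lt zero e by have := (compat ix Hxy).1; rewrite Hix2.
have Hgap : forall z, lt zero z -> lt z e -> False.
  move=> z H1 H2; apply: Hn; exists (add x z); split.
    by have := (compat x H1).1; rewrite (add_unit x).2.
  have := (compat x H2).1; by rewrite /e add_assoc Hix1 (add_unit y).1.
pose Q := fun t => exists w, add w w = t.
have HQ : defA (fun _ => True) (fun E => Q (E 0)).
  have := defA_ex 1 (defA_add (fun _ => True) 1 1 0).
  by apply: defA_ext => E /=; rewrite /upd /=.
have [pts [ivs HQd]] := decomp_of HQ.
have [w Hw] := upper_bound lt_tr lt_tot noend zero (zero :: pts ++ lows ivs ++ ups ivs).
have Hw0 : lt zero w by apply: Hw; left.
have HwL : forall c, List.In c pts \/ List.In c (lows ivs) \/ List.In c (ups ivs) -> lt c w.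
  move=> c Hc; apply: Hw; right; apply: List.in_or_app.
  case: Hc => [|[]] H; [by left|right; apply: List.in_or_app; by left|right; apply: List.in_or_app; by right].
pose t1 := add w w.
have Hwt1 : lt w t1 by have := (compat w Hw0).1; rewrite (add_unit w).2.
have [iv [Hiv [Hl1 Hu1]]] : exists iv, List.In iv ivs /\ lower_ok lt iv.1 t1 /\ iv.2 = None.
  case: (proj1 (HQd t1) (ex_intro _ w erefl)) => [Hp|[[l u] [Hiv [Hl Hu]]]].
    by case: (lt_irr (lt_tr (HwL _ (or_introl Hp)) Hwt1)).
  rewrite /= in Hl Hu; exists (l, u); split=> //; split=> //; case: u Hiv Hu => [u|//] Hiv /= Hu.
  have := HwL u (or_intror (or_intror (in_ups Hiv))) => Huw.
  by case: (lt_irr (lt_tr (lt_tr Hwt1 Hu) Huw)).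
pose t2 := add t1 e.
have Ht12 : lt t1 t2 by have := (compat t1 He0).1; rewrite (add_unit t1).2.
have [u Hu] : Q t2.
  apply/HQd; right; exists iv; split=> //; rewrite Hu1; split=> //.
  case: iv Hiv Hl1 Hu1 => [[l|] u'] //= _ Hl _; exact: lt_tr Hl Ht12.
have mono : forall p q, le lt p q -> le lt (add p p) (add q q).
  move=> p q [Hpq|<-]; last by right.
  left; exact: lt_tr (compat p Hpq).1 (compat q Hpq).2.
case: (classic (lt w u)) => Hwu.
- have Hweu : le lt (add w e) u.
    apply: (notR_le lt_tot) => Hlt.
    have [iw [Hiw1 Hiw2]] := add_inv w.
    apply: (Hgap (add iw u)).
      by have := (compat iw Hwu).1; rewrite Hiw2.
    by have := (compat iw Hlt).1; rewrite add_assoc Hiw2 (add_unit e).1.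
  have H1 := mono _ _ Hweu.
  have H2 : lt t2 (add (add w e) (add w e)).
    rewrite /t2 /t1 -add_assoc -[X in lt _ X]add_assoc.
    apply: (compat w _).1.
    by have := (compat (add w e) He0).2; rewrite (add_unit _).1.
  rewrite Hu in H1.
  exact (lt_irr (R_le_tr lt_tr H2 H1)).
- have H1 := mono _ _ (notR_le lt_tot Hwu).
  rewrite Hu in H1.
  exact (lt_irr (le_R_tr lt_tr H1 Ht12)).
Qed.


Definition dcl1 (B : M -> Prop) t := defA B (fun e => e 0 = t).

Lemma defA_bd (B : M -> Prop) X : defA B (fun e => X (e 0)) -> defA B (fun e => bd lt X (e 0)).
Proof.
move=> HX.
have h1 : defA B (fun E => lt (E 1) (E 3) /\ lt (E 3) (E 2) /\ X (E 3)).
  apply: defA_and; first exact: defA_lt.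
  apply: defA_and; first exact: defA_lt.
  exact: defA_at.
have h2 : defA B (fun E => lt (E 1) (E 3) /\ lt (E 3) (E 2) /\ ~ X (E 3)).
  apply: defA_and; first exact: defA_lt.
  apply: defA_and; first exact: defA_lt.
  apply: defA_not; exact: defA_at.
have := defA_all 1 (defA_all 2 (defA_imp (defA_lt B 1 0) (defA_imp (defA_lt B 0 2)
          (defA_and (defA_ex 3 h1) (defA_ex 3 h2))))).
apply: defA_ext => e; rewrite /upd /=; split.
- move=> H lo hi H1 H2; have := H lo hi H1 H2; case=> [[z Hz] [z' Hz']].
  by split; [exists z | exists z'].
- move=> H lo hi H1 H2; have := H lo hi H1 H2; case=> [[z Hz] [z' Hz']].
  by split; [exists z | exists z'].
Qed.

Lemma fin_dcl n : forall (B : M -> Prop) X L, defA B (fun e => X (e 0)) -> size L <= n ->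
  (forall t, X t -> List.In t L) -> forall t, X t -> dcl1 B t.
Proof.
elim: n => [|n IH] B X L HX HL HXL t Xt.
  by move: HL; rewrite leqn0 => /nilP HL; subst L; case: (HXL t Xt).
have [m [HmL [Xm Hmin]]] := list_min lt_irr lt_tr (ex_intro _ t (conj (HXL t Xt) Xt)).
have Hm : dcl1 B m.
  have := defA_and HX (defA_not (defA_ex 1 (defA_and (defA_at 1 HX) (defA_lt B 1 0)))).
  apply: defA_ext => e; rewrite /upd /=; split.
  - case=> Xe Hn; case: (lt_tot (e 0) m) => [H|[//|H]].
      by case: (Hmin _ (HXL _ Xe) Xe).
    by case: Hn; exists m.
  - move=> ->; split=> // -[s [Xs Hs]]; exact: Hmin _ (HXL _ Xs) Xs Hs.
case: (classic (t = m)) => [->//|Htm].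
have HX' : defA (fun y => B y \/ y = m) (fun e => X (e 0) /\ ~ e 0 = m).
  apply: defA_and; first by apply: defA_mono HX => y; left.
  apply: defA_not; apply: defA_const; by right.
have HX'' := defA_trans HX' (fun c (Hc : c = m) => eq_ind_r _ Hm Hc).
have [L' [HL' HL'c]] := remove_one HmL.
apply: (IH B (fun z => X z /\ z <> m) L' HX'') => //.
  by rewrite -ltnS; apply: leq_trans HL' HL.
by move=> z [Xz Hz]; apply: HL'c => //; exact: HXL.
Qed.


Lemma lt_R_tr_aux x y z : lt x y -> le lt y z -> le lt z x -> False.
Proof.
move=> H1 H2 H3; have H4 := R_le_tr lt_tr H1 H2.
exact: (le_notR lt_irr lt_tr H3) H4.
Qed.

Definition flt := fun x y => lt y x.
Lemma flt_irr : forall x, ~ flt x x. Proof. move=> x; exact: lt_irr. Qed.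
Lemma flt_tr : forall x y z, flt x y -> flt y z -> flt x z.
Proof. move=> x y z H1 H2; exact: lt_tr H2 H1. Qed.
Lemma flt_tot : forall x y, flt x y \/ x = y \/ flt y x.
Proof. move=> x y; rewrite /flt; case: (lt_tot x y) => [|[]]; tauto. Qed.
Lemma flt_noend : forall x, (exists l, flt l x) /\ (exists h, flt x h).
Proof. move=> x; rewrite /flt; have [[l Hl] [h Hh]] := noend x; split; [by exists h|by exists l]. Qed.
Lemma flt_dense : forall x y, flt x y -> exists z, flt x z /\ flt z y.
Proof. move=> x y /dense [z [H1 H2]]; by exists z. Qed.

Lemma decomp_flip X : decomp lt X -> decomp flt X.
Proof.
case=> pts [ivs H]; exists pts, (map (fun iv => (iv.2, iv.1)) ivs) => t; rewrite H.
split=> -[Hp|[iv [Hin [H1 H2]]]]; try by left.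
- right; exists (iv.2, iv.1); split; last by case: iv {Hin} H1 H2 => [[l|] [u|]].
  by apply: (List.in_map (fun iv => (iv.2, iv.1))).
- move/List.in_map_iff: Hin => [[l u] [Heq Hin]]; subst iv.
  right; exists (l, u); split=> //; by case: l u {Hin} H1 H2 => [l|] [u|].
Qed.

Lemma bd_flip X t : bd flt X t -> bd lt X t.
Proof.
move=> H lo hi H1 H2; have [[z [Hz1 [Hz2 Hz]]] [z' [Hz1' [Hz2' Hz']]]] := H hi lo H2 H1.
by split; [exists z | exists z'].
Qed.

Lemma defA_lower (C : M -> Prop) u i : (forall u', u = Some u' -> C u') ->
  defA C (fun E => lower_ok lt u (E i)).
Proof.
case: u => [u'|] Hu; last by apply: (defA_ext (Y := fun _ => True)) => //; exact: defA_prop.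
have := @defA_params S C C (fun E => lt (E 0) (E (i + 1))) [:: u'] (defA_lt C 0 (i + 1)).
move=> /(_ (fun y Hy => match Hy with or_introl H => eq_ind _ C (Hu u' erefl) _ H | or_intror F => match F with end end)).
move=> /(defA_mono (A' := C)) H; apply: defA_ext (H _); last by move=> y [].
move=> E; rewrite /params /=.
have -> : (i + 1 < 1) = false by lia.
by rewrite addn1 subn1.
Qed.

Lemma defA_upper (C : M -> Prop) u i : (forall u', u = Some u' -> C u') ->
  defA C (fun E => upper_ok lt u (E i)).
Proof.
case: u => [u'|] Hu; last by apply: (defA_ext (Y := fun _ => True)) => //; exact: defA_prop.
have := @defA_params S C C (fun E => lt (E (i + 1)) (E 0)) [:: u'] (defA_lt C (i + 1) 0).
move=> /(_ (fun y Hy => match Hy with or_introl H => eq_ind _ C (Hu u' erefl) _ H | or_intror F => match F with end end)).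
move=> /(defA_mono (A' := C)) H; apply: defA_ext (H _); last by move=> y [].
move=> E; rewrite /params /=.
have -> : (i + 1 < 1) = false by lia.
by rewrite addn1 subn1.
Qed.

Lemma exch (B : M -> Prop) a b :
  dcl1 (fun y => B y \/ y = b) a -> ~ dcl1 B a -> dcl1 (fun y => B y \/ y = a) b.
Proof.
move=> [Z [s [HZ [Hs HY]]]] Hna.
have [Y2 [t [HY2 [Ht Hsp]]]] := @defA_split S B (fun y => y = b) s Z (defA_of0 B HZ) Hs.
pose k := size t.
pose F := fun x y => Y2 (fun j => if j < k then y else x).
have HF : defA B (fun e => F (e 0) (e 1)).
  have := defA_pull (fun j => if j < k then 1 else 0) HY2.
  apply: defA_ext => e; rewrite /F.
  by have -> : (fun j => e (if j < k then 1 else 0)) = (fun j => if j < k then e 1 else e 0)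
    by apply: functional_extensionality => j; case: ifP.
have HFb : forall x, F x b <-> x = a.
  move=> x; rewrite (HY (fun _ => x)) Hsp /F.
  suff -> : params (fun _ => x) t = (fun j => if j < k then b else x) by [].
  apply: functional_extensionality => j; rewrite /params -/k; case: ifP => // Hj.
  by rewrite (Ht _ (In_nth _ Hj)).
pose V := fun c y => forall x, F x y <-> x = c.
have HV : defA B (fun e => V (e 0) (e 1)).
  have := defA_all 2 (defA_iff (defA_pull (fun j => if j == 0 then 2 else 1) HF) (defA_eq B 2 0)).
  by apply: defA_ext => e; rewrite /upd /=.
have HVu : forall c c' z, V c z -> V c' z -> c = c'.
  by move=> c c' z H1 H2; apply/H2/H1.
have HVab : V a b by [].
have HZa : defA (fun y => B y \/ y = a) (fun e => V a (e 0)).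
  have := @defA_params S (fun y => y = a) B _ [:: a] HV (fun y Hy => match Hy with or_introl H => esym H | or_intror F => match F with end end).
  move=> /(defA_mono (A' := fun y => B y \/ y = a)) H; apply: defA_ext (H _); last by move=> y [|]; tauto.
  by move=> e; rewrite /params /=.
case: (classic (exists lo hi, lt lo b /\ lt b hi /\ forall z, lt lo z -> lt z hi -> V a z)) => Hint;
  last first.
  have Hbd : bd lt (fun z => V a z) b.
    move=> lo hi H1 H2; split; first by exists b.
    apply: NNPP => Hn; apply: Hint; exists lo, hi; split=> //; split=> // z Hz1 Hz2.
    apply: NNPP => Hnz; apply: Hn; exists z; by split.
  have [L HL] := bd_finite lt_irr lt_tr lt_tot noend (decomp_of HZa).
  exact: (fin_dcl (defA_bd HZa) (leqnn (size L)) HL Hbd).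
case: Hint => lo0 [hi0 [Hlo0 [Hhi0 Hv0]]].
pose LC := fun y => exists c lo hi, lt lo y /\ lt y hi /\ forall z, lt lo z -> lt z hi -> V c z.
have HLC : defA B (fun e => LC (e 0)).
  have h0 : defA B (fun E => lt (E 2) (E 4) -> lt (E 4) (E 3) -> V (E 1) (E 4)).
    apply: defA_imp; first exact: defA_lt.
    apply: defA_imp; first exact: defA_lt.
    exact: (defA_pull (fun j => if j == 0 then 1 else 4) HV).
  have h1 := defA_and (defA_lt B 2 0) (defA_and (defA_lt B 0 3) (defA_all 4 h0)).
  have := defA_ex 1 (defA_ex 2 (defA_ex 3 h1)).
  by apply: defA_ext => e; rewrite /upd /=.
have HLCb : LC b by exists a, lo0, hi0.
have [L HL] := bd_finite lt_irr lt_tr lt_tot noend (decomp_of HLC).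
have HBdd : forall t, bd lt LC t -> dcl1 B t := fin_dcl (defA_bd HLC) (leqnn (size L)) HL.
have [u [Hu1 Hu2]] : exists u : option M, (forall u', u = Some u' -> bd lt LC u' /\ lt u' b) /\
    (forall t, bd lt LC t -> lt t b -> exists2 u', u = Some u' & le lt t u').
  case: (classic (exists t, List.In t L /\ (bd lt LC t /\ lt t b))) => H.
    have [m [HmL [Qm Hmin]]] := list_min flt_irr flt_tr H.
    exists (Some m); split; first by move=> u' [<-].
    move=> t' Ht1 Ht2; exists m => //; apply: (notR_le lt_tot) => Hmt.
    exact: Hmin t' (HL _ Ht1) (conj Ht1 Ht2) Hmt.
  exists None; split=> // t' Ht1 Ht2; case: H; exists t'; split=> //; exact: HL.
have [v [Hv1 Hv2]] : exists v : option M, (forall v', v = Some v' -> bd lt LC v' /\ lt b v') /\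
    (forall t, bd lt LC t -> lt b t -> exists2 v', v = Some v' & le lt v' t).
  case: (classic (exists t, List.In t L /\ (bd lt LC t /\ lt b t))) => H.
    have [m [HmL [Qm Hmin]]] := list_min lt_irr lt_tr H.
    exists (Some m); split; first by move=> u' [<-].
    move=> t' Ht1 Ht2; exists m => //; apply: (notR_le lt_tot) => Hmt.
    exact: Hmin t' (HL _ Ht1) (conj Ht1 Ht2) Hmt.
  exists None; split=> // t' Ht1 Ht2; case: H; exists t'; split=> //; exact: HL.
have claim : forall y, lower_ok lt u y -> upper_ok lt v y -> V a y.
  move=> y Hly Huy; case: (lt_tot b y) => [Hby|[<-//|Hyb]].
  - refine (@connect M lt lt_irr lt_tr lt_tot noend dense V LC a b y HVu _ HLCb HVab Hby _ _).
    + by move=> t'; split.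
    + move=> c Hbc Hcy HBc; have [v' Hv' Hvc] := Hv2 c HBc Hbc.
      rewrite Hv' /= in Huy.
      exact: lt_irr (le_R_tr lt_tr (le_tr lt_tr Hvc Hcy) Huy).
    + apply: (decomp_of (B := fun _ => True)).
      have h := defA_and (defA_or (defA_lt _ 0 3) (defA_eq _ 0 3))
         (defA_and (defA_or (defA_lt _ 3 1) (defA_eq _ 3 1))
           (defA_not (defA_pull (fun j => if j == 0 then 2 else 3) HV))).
      have := @defA_params S (fun _ => True) B _ [:: b; y; a] h (fun _ _ => I).
      move=> H; have := defA_mono (A' := fun _ => True) (fun _ _ => I) H.
      by apply: defA_ext => e; rewrite /params /=.
  - refine (@connect M flt flt_irr flt_tr flt_tot flt_noend flt_dense V LC a b y HVu _ HLCb HVab Hyb _ _).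
    + move=> t'; split; case=> c [lo [hi [H1 [H2 H3]]]]; exists c, hi, lo; split=> //; split=> //.
      * by move=> z Hz1 Hz2; apply: H3.
      * by move=> z Hz1 Hz2; apply: H3.
    + move=> c Hbc Hcy /bd_flip HBc; have [u' Hu' Hcu] := Hu2 c HBc Hbc.
      rewrite Hu' /= in Hly.
      have Hyc : le lt y c by case: Hcy => [H|->]; [left|right].
      exact: lt_R_tr_aux Hly Hyc Hcu.
    + apply: decomp_flip; apply: (decomp_of (B := fun _ => True)).
      have h := defA_and (defA_or (defA_lt _ 3 0) (defA_eq _ 0 3))
         (defA_and (defA_or (defA_lt _ 1 3) (defA_eq _ 3 1))
           (defA_not (defA_pull (fun j => if j == 0 then 2 else 3) HV))).
      have := @defA_params S (fun _ => True) B _ [:: b; y; a] h (fun _ _ => I).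
      move=> H; have := defA_mono (A' := fun _ => True) (fun _ _ => I) H.
      by apply: defA_ext => e; rewrite /params /=.
have Hlb : forall w, (forall u', w = Some u' -> bd lt LC u' /\ lt u' b) -> lower_ok lt w b.
  by case=> [u'|] // H; exact: (H u' erefl).2.
have Hub : forall w, (forall u', w = Some u' -> bd lt LC u' /\ lt b u') -> upper_ok lt w b.
  by case=> [u'|] // H; exact: (H u' erefl).2.
pose C := fun z => u = Some z \/ v = Some z.
have HW : defA (fun z => B z \/ C z)
    (fun e => forall y, lower_ok lt u (upd e 1 y 1) -> upper_ok lt v (upd e 1 y 1) ->
                        V (upd e 1 y 0) (upd e 1 y 1)).
  have hl : defA (fun z => B z \/ C z) (fun E => lower_ok lt u (E 1)).
    apply: defA_lower => u' Hu'; by right; left.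
  have hu : defA (fun z => B z \/ C z) (fun E => upper_ok lt v (E 1)).
    apply: defA_upper => v' Hv'; by right; right.
  have hv : defA (fun z => B z \/ C z) (fun E => V (E 0) (E 1)).
    by apply: defA_mono HV => z Hz; left.
  exact: (defA_all 1 (defA_imp hl (defA_imp hu hv))).
have Ha : dcl1 (fun z => B z \/ C z) a.
  apply: defA_ext HW => e; rewrite /upd /=; split.
  - move=> H; exact: (HVu _ _ b (H b (Hlb u Hu1) (Hub v Hv1)) HVab).
  - move=> ->; exact: claim.
case: Hna; rewrite /dcl1; apply: (defA_trans (C := C) Ha) => c [Hc|Hc].
  by apply: HBdd; have [] := Hu1 _ Hc.
by apply: HBdd; have [] := Hv1 _ Hc.
Qed.

End Omin.


Fixpoint filterP (T : Type) (Q : T -> Prop) (l : seq T) : seq T :=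
  match l with
  | [::] => [::]
  | x :: l' => if excluded_middle_informative (Q x) then x :: filterP Q l' else filterP Q l'
  end.

Lemma filterP_In (T : Type) (Q : T -> Prop) l x : List.In x (filterP Q l) <-> List.In x l /\ Q x.
Proof.
elim: l => [|y l IH] /=; first by split=> // -[].
case: excluded_middle_informative => Hy /=; rewrite IH; split.
- by case=> [<-|[]]; [split=> //; left | split=> //; right].
- by case=> -[<-|H] Qx; [left|right].
- by case=> H Qx; split=> //; right.
- by case=> -[<-|H] Qx //; split.
Qed.

Theorem corollary3p7 (S : Structure) (lt : car S -> car S -> Prop)
    (add : car S -> car S -> car S) (zero one : car S)
    (P D : car S -> Prop) :
  omin_ordered_group lt add zero one ->
  dcl_indep D P ->
  OP lt P ->
  ind P D ->
  (forall A : car S -> Prop, (forall a, A a -> P a) ->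
     forall a, clD P D A a <-> (dclS (fun y => A y \/ D y) a /\ P a)) /\
  pregeometry P (clD P D).
Proof.
move=> Hom Hind Hop _.
have equiv : forall A : car S -> Prop, (forall a, A a -> P a) ->
     forall a, clD P D A a <-> (dclS (fun y => A y \/ D y) a /\ P a).
  move=> A HA a; split.
  - move=> H; split; last by case: H.
    exact: (dirA (lt_irr Hom) (lt_tot Hom) (noend Hom) Hop Hind HA H).
  - by case=> H Pa; exact: dirB HA H Pa.
have clP : forall A a, clD P D A a -> P a by move=> A a [].
split=> //.
split; first by move=> A _ a /clP.
split.
  move=> A HA a Aa; apply/equiv => //; split; last exact: HA.
  by apply/dclS_defA; apply: defA_const; left.
split.
  move=> A B HA HB HAB a /(equiv _ HA) [H Pa]; apply/equiv => //; split=> //.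
  by apply: dclS_mono H => y [/HAB|]; [left|right].
split.
  move=> A HA a /(equiv _ (clP A)) [H Pa]; apply/equiv => //; split=> //.
  apply/dclS_defA; move/dclS_defA: H => H.
  apply: (defA_trans (C := clD P D A)).
    by apply: defA_mono H => y [Hy|Hy]; [right|left; right].
  by move=> c /(equiv _ HA) [/dclS_defA Hc _].
split.
  move=> A HA a /(equiv _ HA) [/dclS_defA [Z [s0 [HZ [Hs0 HY]]]] Pa].
  exists (filterP A s0); split; first by move=> b /filterP_In [].
  have Hs : forall b, List.In b (filterP A s0) -> P b by move=> b /filterP_In [_ /HA].
  apply/(equiv _ Hs); split=> //; apply/dclS_defA; exists Z, s0; split=> //; split=> //.
  move=> y Hy; case: (Hs0 y Hy) => H; [left; apply/filterP_In | right] => //.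
move=> A HA a b Pa Pb Hab Hna.
have HAb : forall y, A y \/ y = b -> P y by move=> y [/HA|->].
have HAa : forall y, A y \/ y = a -> P y by move=> y [/HA|->].
move/(equiv _ HAb): Hab => [H1 _].
have H2 : ~ dclS (fun y => A y \/ D y) a by move=> H; apply: Hna; apply/equiv.
apply/(equiv _ HAa); split=> //.
have H3 : dcl1 (fun y => (A y \/ D y) \/ y = b) a.
  apply/dclS_defA; apply: dclS_mono H1 => y; tauto.
have H4 : ~ dcl1 (fun y => A y \/ D y) a by move=> H; apply: H2; apply/dclS_defA.
have := exch Hom H3 H4 => /dclS_defA; apply: dclS_mono => y; tauto.
Qed.
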